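(* Let $U$ be a compact metric space, $X\subset\mathbb R^N$ compact, $T:U\to U$ surjective, and $g:U\times X\to X$ a continuous driven system that is SI-invertible and has the unique solution property. Let $H_2:\widehat U_T\to Y_T\subset\mathbb R^N\times\mathbb R^N$, $H_2(\overleftarrow u)=(h(r\overleftarrow u),h(\overleftarrow u))$, and for $i=1,\ldots,N$ let $\pi_i:\mathbb R^N\times\mathbb R^N\to\mathbb R^2$, $\pi_i(y,z)=(y^i,z^i)$, and $f_i:=\pi_i\circ H_2:\widehat U_T\to\mathbb R^2$. Let $\mathcal K$ be the Koopman operator of $\widehat T$, i.e. $\mathcal K f=f\circ\widehat T$. Then for each $i=1,\ldots,N$, $$\mathcal K f_i=\pi_i\circ G_T\circ H_2 .$$
   Context: An orbit of $T$ is a bi-infinite sequence $\{u_n\}$ with $u_{n+1}=Tu_n$. A solution of $g$ for an input $\{u_n\}_{n\in\mathbb Z}\subset U$ is a sequence $\{x_n\}_{n\in\mathbb Z}\subset X$ with $x_{n+1}=g(u_n,x_n)$. $g$ is SI-invertible if $g(\cdot,x)$ is injective for each $x$; $g$ has the unique solution property if each input has exactly one solution. $\overleftarrow U$ is the space of left-infinite sequences $(\ldots,u_{-2},u_{-1})$ in $U$ with the product topology; $r(\ldots,u_{-3},u_{-2},u_{-1})=(\ldots,u_{-3},u_{-2})$. Under the unique solution property, $h:\overleftarrow U\to X$ is defined by $h(\ldots,u_{-2},u_{-1})=x_0$ where $\{x_n\}$ is the unique solution for any bi-infinite input extending $(\ldots,u_{-2},u_{-1})$ (this depends only on the left-infinite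 part). The inverse-limit space is $\widehat U_T=\{(\ldots,u_{-2},u_{-1}):Tu_n=u_{n+1}\}$ with $\widehat T(\ldots,u_{-2},u_{-1})=(\ldots,u_{-2},u_{-1},Tu_{-1})$. $Y_T=\{(x_{n-1},x_n):\{x_k\}\text{ a solution of }g\text{ for some orbit of }T,\ n\in\mathbb Z\}$ and $G_T:Y_T\to Y_T$ is the map $(x_{n-1},x_n)\mapsto(x_n,x_{n+1})$ along such solutions. *)

(* Defs.v *)
From HB Require Import structures.
From mathcomp Require Import all_boot all_order all_algebra.
From mathcomp Require Import all_classical all_reals all_analysis.
Set Implicit Arguments. Unset Strict Implicit. Unset Printing Implicit Defensive.
Import Order.TTheory GRing.Theory Num.Theory.
Local Open Scope classical_set_scope.
Local Open Scope ring_scope.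

(* Bi-infinite sequences are indexed by [int]. A left-infinite sequence
   (..., u_{-2}, u_{-1}) is encoded as [ul : nat -> U] with [ul k = u_{-(k+1)}]. *)

Section DrivenSystems.
Variables (R : realType) (N : nat) (U : Type).
Implicit Types (T : U -> U) (g : U -> 'rV[R]_N -> 'rV[R]_N) (X : set 'rV[R]_N).

Definition is_solution g X (u : int -> U) (x : int -> 'rV[R]_N) : Prop :=
  (forall n, X (x n)) /\ (forall n, x (n + 1) = g (u n) (x n)).

Definition is_orbit T (u : int -> U) : Prop := forall n, u (n + 1) = T (u n).

Definition SI_invertible g X : Prop :=
  forall x, X x -> injective (fun u => g u x).

Definition unique_solution_property g X : Prop :=
  forall u : int -> U, exists! x, is_solution g X u x.

(* r (..., u_{-2}, u_{-1}) = (..., u_{-3}, u_{-2}) *)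
Definition rshift (ul : nat -> U) : nat -> U := fun k => ul k.+1.

Definition extend (ul : nat -> U) : int -> U :=
  fun n => match n with Posz _ => ul 0%N | Negz k => ul k end.

Definition h g X (ul : nat -> U) : 'rV[R]_N :=
  (xget (fun _ => 0) [set x | is_solution g X (extend ul) x]) 0.

Definition inv_limit T : set (nat -> U) :=
  [set ul | forall k, T (ul k.+1) = ul k].

(* \hat T (..., u_{-2}, u_{-1}) = (..., u_{-2}, u_{-1}, T u_{-1}) *)
Definition That T (ul : nat -> U) : nat -> U :=
  fun k => if k is k'.+1 then ul k' else T (ul 0%N).

Definition Y_T T g X : set ('rV[R]_N * 'rV[R]_N) :=
  [set y | exists u x (n : int), is_orbit T u /\ is_solution g X u x /\
                               y = (x (n - 1), x n)].

(* G_T : (x_{n-1}, x_n) |-> (x_n, x_{n+1}) along solutions for orbits of T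
   (chosen representative; identity outside Y_T) *)
Definition G_T T g X (y : 'rV[R]_N * 'rV[R]_N) : 'rV[R]_N * 'rV[R]_N :=
  xget y [set z | exists u x (n : int), is_orbit T u /\ is_solution g X u x /\
                  y = (x (n - 1), x n) /\ z = (x n, x (n + 1))].

Definition H2 g X (ul : nat -> U) : 'rV[R]_N * 'rV[R]_N := (h g X (rshift ul), h g X ul).

Definition proj_i (i : 'I_N) (yz : 'rV[R]_N * 'rV[R]_N) : R * R :=
  (yz.1 0 i, yz.2 0 i).

Definition f_i g X (i : 'I_N) : (nat -> U) -> R * R := proj_i i \o H2 g X.

Definition Koopman T (f : (nat -> U) -> R * R) : (nat -> U) -> R * R := f \o That T.

End DrivenSystems.

(* Main.v *)
Require Import Defs.
From HB Require Import structures.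
From mathcomp Require Import all_boot all_order all_algebra.
From mathcomp Require Import all_classical all_reals all_analysis.
From mathcomp Require Import zify.
Import Order.TTheory GRing.Theory Num.Theory numFieldNormedType.Exports.
Local Open Scope classical_set_scope.
Local Open Scope ring_scope.

Section Aux.
Variables (R : realType) (N : nat) (U : Type).
Variables (X : set 'rV[R]_N) (g : U -> 'rV[R]_N -> 'rV[R]_N).
Hypothesis Xinv : forall u x, X x -> X (g u x).
Hypothesis usp : unique_solution_property g X.

Lemma h_sol (ul : nat -> U) (u : int -> U) (x : int -> 'rV[R]_N) :
  (forall k, u (Negz k) = ul k) -> is_solution g X u x -> h g X ul = x 0.
Proof.
move=> Hu [Xx Sx].
have [x' [Sx' _]] := usp (extend ul).
rewrite /h; set y := xget _ _.
have Sy : is_solution g X (extend ul) y by apply: xgetPex; exists x'.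
case: Sy => Xy Sy.
pose F := fix F m := if m is m'.+1 then g (u (Posz m')) (F m') else y 0.
pose z : int -> 'rV[R]_N := fun n => match n with Posz m => F m | Negz k => y (Negz k) end.
have Sz : is_solution g X u z.
  split.
    case=> [m|k] /=; last exact: Xy.
    by elim: m => [|m IH] /=; [exact: Xy | exact: Xinv].
  case=> [m|[|k]].
  - by have -> : (Posz m + 1 = Posz m.+1)%R by lia.
  - by rewrite Hu; exact: (Sy (Negz 0)).
  - have -> : (Negz k.+1 + 1 = Negz k)%R by lia.
    have := Sy (Negz k.+1).
    have -> : (Negz k.+1 + 1 = Negz k)%R by lia.
    by move=> E; rewrite Hu; exact: E.
have [x0 [Sx0 U0]] := usp u.
have e1 := U0 _ Sz.
have e2 := U0 _ (conj Xx Sx).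
have ezx : z = x by rewrite -e1 -e2.
by have := congr1 (fun f => f 0) ezx.
Qed.
End Aux.

Theorem corollary1 (R : realType) (N : nat) (U : metricType R)
  (X : set 'rV[R]_N) (T : U -> U) (g : U -> 'rV[R]_N -> 'rV[R]_N) :
  compact [set: U] ->
  compact X ->
  (forall u x, X x -> X (g u x)) ->
  {within [set: U] `*` X, continuous (fun p : U * 'rV[R]_N => g p.1 p.2)} ->
  (forall v : U, exists u, T u = v) ->
  SI_invertible g X ->
  unique_solution_property g X ->
  forall i : 'I_N, forall ul, inv_limit T ul ->
    Koopman T (f_i g X i) ul = (proj_i i \o G_T T g X \o H2 g X) ul.
Proof.
move=> _ _ Xinv _ _ SI usp i ul Hul.
pose u : int -> U := fun n => match n with Posz m => iter m.+1 T (ul 0%N) | Negz k => ul k end.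
have Ou : is_orbit T u.
  case=> [m|[|k]].
  - by have -> : (Posz m + 1 = Posz m.+1)%R by lia.
  - by [].
  - have -> : (Negz k.+1 + 1 = Negz k)%R by lia.
    by rewrite /= Hul.
have [x [[Xx Sx] _]] := usp u.
have hm1 : Defs.h g X (Defs.rshift ul) = x (0 - 1).
  apply: (@h_sol R N U X g Xinv usp _ (fun n => u (n - 1)) (fun n => x (n - 1))).
    move=> k; have -> : (Negz k - 1 = Negz k.+1)%R by lia.
    by [].
  split=> n; first exact: Xx.
  by rewrite addrK -Sx subrK.
have h0 : Defs.h g X ul = x 0.
  by apply: (@h_sol R N U X g Xinv usp _ u) => //.
have h1 : Defs.h g X (That T ul) = x (0 + 1).
  apply: (@h_sol R N U X g Xinv usp _ (fun n => u (n + 1)) (fun n => x (n + 1))).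
    case=> [|k]; first by [].
    by have -> : (Negz k.+1 + 1 = Negz k)%R by lia.
  split=> n; first exact: Xx.
  by rewrite Sx.
rewrite /Koopman /f_i /= /H2.
have -> : Defs.rshift (That T ul) = ul by [].
rewrite /G_T hm1 h0 h1.
rewrite (@xget_unique _ _ _ (x 0, x (0 + 1))) //.
  by exists u, x, 0; split=> //; split=> //.
move=> z [v [y [n [Ov [[Xy Sy] [e ->]]]]]].
case: e => e1 e2.
have ev : v (n - 1) = u (0 - 1).
  apply: (SI (y (n - 1)) (Xy _)).
  rewrite /= -Sy subrK -e1 -e2.
  by have := Sx (0 - 1); rewrite subrK.
have evn : v n = u 0.
  have E1 := Ov (n - 1); rewrite subrK in E1.
  have E2 := Ou (0 - 1); rewrite subrK in E2.
  by rewrite E1 E2 ev.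
by rewrite Sy evn -e2 Sx.
Qed.
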